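(* Let $t\ge1$ and let $\mathcal{C}_0\subseteq S^\ell$ be a code of length $\ell$ over a set $S$ of size $s$, with dual distance $t+2\le\ell$ and no repeated codewords. Let $\mathcal{T}_{\mathcal{C}_0}=(X,\mathcal{B},\mathcal{G})$ be its associated design and $q$ a prime power. Then the query distribution $\mathcal{Q}$ on $\mathcal{T}_{\mathcal{C}_0}$ (defined in the context) is $t$-private: for every $T\subseteq[1,\ell]$ with $|T|\le t$ and all $i,i'\in X$, the tuples $(\mathcal{Q}(i)_j)_{j\in T}$ and $(\mathcal{Q}(i')_j)_{j\in T}$ have the same distribution; and for every $u\in\mathrm{IC}_q(\mathcal{C}_0)$ and every outcome, $u_i=-\sum_{j\ne j^*(i)}u_{\mathcal{Q}(i)_j}$.
   Context: $\mathcal{T}_{\mathcal{C}_0}$: points $X=S\times[1,\ell]$, groups $G_j=S\times\{j\}$ ($1\le j\le\ell$), blocks $B_c=\{(c_j,j):1\le j\le\ell\}$ for $c\in\mathcal{C}_0$. $\mathrm{IC}_q(\mathcal{C}_0)=\{u\in\mathbb{F}_q^X:\sum_{x\in B_c}u_x=0\ \forall c\in\mathcal{C}_0\}$. Dual distance (Delsarte): with $A_i=\frac{1}{|\mathcal{C}_0|}\#\{(c,c')\in\mathcal{C}_0^2:d(c,c')=i\}$ and $B_k=\frac{1}{|\mathcal{C}_0|}\sum_{i=0}^\ell A_iK_k(i)$, where $K_k(i)=\sum_{j}(-1)^j(s-1)^{k-j}\binom{i}{j}\binom{\ell-i}{k-j}$, the dual distance is the least $k\ge1$ with $B_k\ne0$;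 for a linear code it equals the minimum distance of the dual code. Query distribution: for $i\in X$ let $j^*=j^*(i)$ be the index with $i\in G_{j^*}$, $\mathcal{B}_i$ the set of blocks containing $i$; choose $B$ uniformly in $\mathcal{B}_i$ and independently $\mathcal{Q}(i)_{j^*}$ uniformly in $G_{j^*}$; for $j\ne j^*$, $\mathcal{Q}(i)_j$ is the unique element of $B\cap G_j$. *)

(* Defs.v *)
From HB Require Import structures.
From mathcomp Require Import all_boot all_order all_algebra all_field.
Set Implicit Arguments. Unset Strict Implicit. Unset Printing Implicit Defensive.
Import Order.TTheory GRing.Theory Num.Theory.

(* Coordinates [1, l] are represented 0-based by 'I_l.
   A word of length l over S is a finite function 'I_l -> S.
   A code without repeated codewords is a finite set of words. *)
Definition word (S : finType) (l : nat) := {ffun 'I_l -> S}.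

Section Code.
Variables (S : finType) (l : nat).
Local Open Scope ring_scope.

Definition hamming (c c' : word S l) : nat := #|[set j | c j != c' j]|.

Definition krawtchouk (k i : nat) : rat :=
  \sum_(j < k.+1) (-1) ^+ j * (#|S|%:R - 1) ^+ (k - j)
                  * ('C(i, j))%:R * ('C(l - i, k - j))%:R.

Definition distA (C : {set word S l}) (i : nat) : rat :=
  (#|[set p : word S l * word S l |
        (p.1 \in C) && (p.2 \in C) && (hamming p.1 p.2 == i)]|)%:R / (#|C|)%:R.

Definition distB (C : {set word S l}) (k : nat) : rat :=
  (#|C|)%:R^-1 * \sum_(i < l.+1) distA C i * krawtchouk k i.

Definition dual_distance_is (C : {set word S l}) (d : nat) : Prop :=
  (1 <= d)%N /\ distB C d != 0 /\
  forall k : nat, (1 <= k)%N -> (k < d)%N -> distB C k = 0.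

Definition point := (S * 'I_l)%type.
Definition group (j : 'I_l) : {set point} := [set x : point | x.2 == j].
Definition block (c : word S l) : {set point} := [set (c j, j) | j : 'I_l].
Definition blocks (C : {set word S l}) : {set {set point}} := [set block c | c in C].
Definition blocks_at (C : {set word S l}) (i : point) : {set {set point}} :=
  [set B in blocks C | i \in B].

Definition IC (F : fieldType) (C : {set word S l}) (u : point -> F) : Prop :=
  forall c, c \in C -> \sum_(x in block c) u x = 0.

(* Query distribution: an outcome for i is a pair (B, x) with B uniform in
   blocks_at C i and x uniform in S (so that Q(i)_{j_star} = (x, j_star)),
   chosen independently: i.e. uniform on the product set. *)
Definition outcomes (C : {set word S l}) (i : point) : {set {set point} * S} :=
  [set o : {set point} * S | o.1 \in blocks_at C i].

Definition query (i : point) (o : {set point} * S) (j : 'I_l) : point :=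
  if j == i.2 then (o.2, i.2) else odflt i [pick y | y \in o.1 :&: group j].

Definition query_prob (C : {set word S l}) (i : point)
    (E : ('I_l -> point) -> bool) : rat :=
  (#|[set o in outcomes C i | E (query i o)]|)%:R / (#|outcomes C i|)%:R.

End Code.

(* Main.v *)
Require Import Defs.
From HB Require Import structures.
From mathcomp Require Import all_boot all_order all_algebra all_field.
From mathcomp Require Import ring lra zify.
Import Order.TTheory GRing.Theory Num.Theory.
Set Implicit Arguments. Unset Strict Implicit. Unset Printing Implicit Defensive.
Local Open Scope ring_scope.

Lemma prod1D_subsets (R : comNzRingType) (I : finType) (a : I -> R) :
  \prod_i (a i + 1) = \sum_(A : {set I}) \prod_(i in A) a i.
Proof.
rewrite (bigA_distr _ _ (a) (fun=> 1)).
by apply: eq_bigr => A _; rewrite [RHS]big_mkcond.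
Qed.

Lemma prod1D_subsets_in (R : comNzRingType) (I : finType) (J : {set I}) (a : I -> R) :
  \prod_(i in J) (a i + 1) = \sum_(A : {set I} | A \subset J) \prod_(i in A) a i.
Proof.
rewrite big_mkcond /=.
rewrite (eq_bigr (fun i => (if i \in J then a i else 0) + 1)); last first.
  by move=> i _; case: ifP => //; rewrite add0r.
rewrite prod1D_subsets [RHS]big_mkcond /=; apply: eq_bigr => A _.
case: ifP => sAJ.
  by apply: eq_bigr => i iA; rewrite (subsetP sAJ i iA).
move/negbT: sAJ => /subsetPn [i iA niJ].
by rewrite (bigD1 i) //= (negbTE niJ) mul0r.
Qed.

Lemma coef_1cX (R : comNzRingType) (c : R) n i :
  ((c%:P * 'X + 1) ^+ n)`_i = c ^+ i *+ 'C(n, i).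
Proof.
elim: n i => [|n IH] i.
  by rewrite expr0 coefC; case: i => [|i]; rewrite ?expr0 ?bin0 ?bin0n.
rewrite exprSr mulrDr mulr1 coefD mulrA coefMX coefMC IH addrC.
case: i => [|i]; first by rewrite /= addr0 IH !bin0.
rewrite /= IH binS mulrnDr mulrnAl -exprSr.
by rewrite addrC.
Qed.

Section Kr.
Variables (S : finType) (l : nat).

Definition ee (x y : word S l) (j : 'I_l) : rat := #|S|%:R * (x j == y j)%:R - 1.

Lemma card_agree (x y : word S l) :
  #|[pred j | x j == y j]| = (l - hamming x y)%N.
Proof.
have H : (#|[pred j | x j == y j]| + hamming x y)%N = l.
  rewrite -[RHS]card_ord -(cardC [pred j | x j == y j]); congr addn.
  by apply: eq_card => j; rewrite !inE.
lia.
Qed.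

Lemma card_disagree (x y : word S l) :
  #|[pred j | x j != y j]| = hamming x y.
Proof. by apply: eq_card => j; rewrite !inE. Qed.

Lemma kraw_sum (x y : word S l) k :
  \sum_(J : {set 'I_l} | #|J| == k) \prod_(j in J) ee x y j =
  krawtchouk S l k (hamming x y).
Proof.
pose P : {poly rat} := \prod_(j < l) ((ee x y j)%:P * 'X + 1).
have Pa : P = \sum_(A : {set 'I_l}) (\prod_(j in A) ee x y j)%:P * 'X^#|A|.
  rewrite /P prod1D_subsets; apply: eq_bigr => A _.
  by rewrite big_split /= rmorph_prod prodr_const.
have Pb : P = ((-1)%:P * 'X + 1) ^+ hamming x y *
              ((#|S|%:R - 1)%:P * 'X + 1) ^+ (l - hamming x y).
  rewrite /P (bigID (fun j => x j == y j)) /=.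
  rewrite (eq_bigr (fun=> ((#|S|%:R - 1)%:P * 'X + 1))); last first.
    by move=> j /eqP E; rewrite /ee E eqxx mulr1.
  rewrite [X in _ * X](eq_bigr (fun=> ((-1)%:P * 'X + 1))); last first.
    by move=> j /negbTE H; rewrite /ee H mulr0 sub0r.
  rewrite !prodr_const card_agree mulrC.
  by rewrite -(card_disagree x y).
have := congr1 (fun p : {poly rat} => p`_k) Pa.
rewrite {1}Pb coefM coef_sum => E.
rewrite big_mkcond /=.
have E2 : forall A : {set 'I_l}, ((\prod_(j in A) ee x y j)%:P * 'X^#|A|)`_k =
   (if #|A| == k then \prod_(j in A) ee x y j else 0).
  by move=> A; rewrite coefCM coefXn eq_sym; case: eqP; rewrite ?mulr1 ?mulr0.
rewrite -(eq_bigr _ (fun A _ => E2 A)) -E /krawtchouk.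
apply: eq_bigr => j _.
rewrite !coef_1cX.
by rewrite -(mulr_natr ((-1)^+j)) -(mulr_natr ((#|S|%:R - 1) ^+ (k - j))) mulrACA !mulrA.
Qed.
End Kr.


Section Psd.
Variables (S : finType) (l : nat).
Local Notation s := (#|S|%:R : rat).

Definition gg (z a : S) : rat := s * (a == z)%:R - 1.
Definition GG (J : {set 'I_l}) (w x : word S l) : rat := \prod_(j in J) gg (w j) (x j).

Lemma sum_eq1 (a : S) : \sum_z ((a == z)%:R : rat) = 1.
Proof.
rewrite (bigD1 a) //= eqxx big1 ?addr0 // => z /negbTE.
by rewrite eq_sym => ->.
Qed.

Lemma sum_eq2 (a b : S) : \sum_z ((a == z)%:R * (b == z)%:R : rat) = (a == b)%:R.
Proof.
rewrite (bigD1 a) //= eqxx mul1r big1 ?addr0 ?(eq_sym b) // => z /negbTE.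
by rewrite eq_sym => ->; rewrite mul0r.
Qed.

Lemma one_coord (a b : S) : \sum_z gg z a * gg z b = s * (s * (a == b)%:R - 1).
Proof.
rewrite (eq_bigr (fun z => s * s * ((a == z)%:R * (b == z)%:R) - s * (a == z)%:R
   - s * (b == z)%:R + 1)); last first.
  by move=> z _; rewrite /gg !(eq_sym _ z); ring.
rewrite big_split /= !sumrB -!mulr_sumr sum_eq2 !sum_eq1 sumr_const.
ring.
Qed.

Lemma psd (J : {set 'I_l}) (x y : word S l) :
  s ^+ l * \prod_(j in J) ee x y j = \sum_(w : word S l) GG J w x * GG J w y.
Proof.
rewrite (eq_bigr (fun w : word S l => \prod_j
    (fun j z => if j \in J then gg z (x j) * gg z (y j) else 1) j (w j))); last first.
  by move=> w _; rewrite /GG -big_split /= big_mkcond.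
rewrite -(bigA_distr_bigA (fun j z => if j \in J then gg z (x j) * gg z (y j) else 1)) /=.
rewrite [RHS](eq_bigr (fun j => s * (if j \in J then ee x y j else 1))); last first.
  move=> j _; case: ifP => jJ; first by rewrite one_coord.
  by rewrite sumr_const mulr1.
by rewrite big_split /= prodr_const card_ord -big_mkcond.
Qed.
End Psd.


Lemma sum_ind (T : finType) (P Q : pred T) :
  \sum_(p | P p) ((Q p)%:R : rat) = (#|[set p | P p && Q p]|)%:R.
Proof.
rewrite -sum1_card natr_sum [LHS]big_mkcond [RHS]big_mkcond /=.
by apply: eq_bigr => p _; rewrite inE; case: (P p); case: (Q p).
Qed.

Lemma prod_ind (I : finType) (J : {set I}) (b : I -> bool) :
  \prod_(j in J) ((b j)%:R : rat) = ([forall j in J, b j])%:R.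
Proof.
case: (boolP [forall j in J, b j]) => H.
  by apply: big1 => j jJ; move/forall_inP: H => /(_ j jJ) ->.
move/forall_inPn: H => [j jJ nb].
by rewrite (bigD1 j) //= (negbTE nb) mul0r.
Qed.

Section OA.
Variables (S : finType) (l t : nat) (C : {set word S l}).
Hypothesis hd : dual_distance_is C t.+2.
Local Notation s := (#|S|%:R : rat).
Local Notation PC := (fun p : word S l * word S l => (p.1 \in C) && (p.2 \in C)).

Lemma C_nonempty : #|C| != 0%N.
Proof.
case: hd => _ [H _]; apply: contra H => /eqP H.
by rewrite /distB H invr0 mul0r.
Qed.

Lemma ham_le (x y : word S l) : (hamming x y <= l)%N.
Proof. by rewrite /hamming -[X in (_ <= X)%N]card_ord max_card. Qed.

Lemma distB_sum k : distB C k = #|C|%:R^-1 * #|C|%:R^-1 *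
   \sum_(p | PC p) krawtchouk S l k (hamming p.1 p.2).
Proof.
rewrite /distB /distA.
under eq_bigr do rewrite mulrAC.
rewrite -mulr_suml mulrA [_ * _^-1]mulrC mulrA; congr (_ * _).
rewrite (eq_bigr (fun p => \sum_(i < l.+1) ((hamming p.1 p.2 == i)%:R *
    krawtchouk S l k i))); last first.
  move=> p _; rewrite (bigD1 (inord (hamming p.1 p.2))) //= inordK ?ltnS ?ham_le //.
  rewrite eqxx mul1r big1 ?addr0 // => i Hi.
  have -> : (hamming p.1 p.2 == i) = false.
    apply/negbTE; apply: contra Hi => /eqP E; apply/eqP/val_inj.
    by rewrite /= inordK ?ltnS ?ham_le // E.
  by rewrite mul0r.
rewrite exchange_big /=; apply: eq_bigr => i _.
by rewrite -mulr_suml sum_ind.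
Qed.

Hypothesis hs : (0 < #|S|)%N.

Definition NN (J : {set 'I_l}) : rat := \sum_(p | PC p) \prod_(j in J) ee p.1 p.2 j.

Lemma s_gt0 : 0 < s. Proof. by rewrite ltr0n. Qed.

Lemma NN_sq J : s ^+ l * NN J = \sum_(w : word S l) (\sum_(c in C) GG J w c) ^+ 2.
Proof.
rewrite /NN mulr_sumr (eq_bigr (fun p => \sum_(w : word S l) GG J w p.1 * GG J w p.2)); last first.
  by move=> p _; rewrite psd.
rewrite exchange_big /=; apply: eq_bigr => w _.
by rewrite expr2 big_distrlr /= pair_big_dep.
Qed.

Lemma NN_ge0 J : 0 <= NN J.
Proof.
have : 0 <= s ^+ l * NN J.
  by rewrite NN_sq; apply: sumr_ge0 => w _; apply: sqr_ge0.
by rewrite pmulr_rge0 // exprn_gt0 // s_gt0.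
Qed.

Lemma NN_zero (J : {set 'I_l}) : (1 <= #|J| <= t.+1)%N -> NN J = 0.
Proof.
move=> /andP [J1 J2].
case: hd => _ [_ H].
have := H #|J| J1 J2; rewrite distB_sum => /eqP.
rewrite !mulf_eq0 !invr_eq0 pnatr_eq0 (negbTE C_nonempty) /= => /eqP E.
have E2 : \sum_(A : {set 'I_l} | #|A| == #|J|) NN A = 0.
  rewrite -[RHS]E /NN exchange_big /=; apply: eq_bigr => p _.
  by rewrite kraw_sum.
by apply: (psumr_eq0P (fun (A : {set 'I_l}) _ => NN_ge0 A) E2).
Qed.

Lemma GG_zero (J : {set 'I_l}) (w : word S l) : (1 <= #|J| <= t.+1)%N -> \sum_(c in C) GG J w c = 0.
Proof.
move=> HJ.
have E : \sum_(w : word S l) (\sum_(c in C) GG J w c) ^+ 2 = 0.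
  by rewrite -NN_sq NN_zero // mulr0.
apply/eqP; rewrite -sqrf_eq0; apply/eqP.
by apply: (psumr_eq0P (fun w _ => sqr_ge0 _) E).
Qed.

Lemma OA (J : {set 'I_l}) (w : word S l) : (#|J| <= t.+1)%N ->
  s ^+ #|J| * (#|[set c in C | [forall j in J, c j == w j]]|)%:R = (#|C|)%:R.
Proof.
move=> HJ.
have E1 : forall c : word S l, \prod_(j in J) (gg (w j) (c j) + 1) =
    s ^+ #|J| * ([forall j in J, c j == w j])%:R.
  move=> c; rewrite -prod_ind -prodr_const -big_split /=.
  by apply: eq_bigr => j _; rewrite /gg subrK.
have E2 : \sum_(c in C) \prod_(j in J) (gg (w j) (c j) + 1) = (#|C|)%:R.
  rewrite (eq_bigr (fun c => \sum_(A : {set 'I_l} | A \subset J) GG A w c)); last first.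
    by move=> c _; rewrite prod1D_subsets_in.
  rewrite exchange_big /= (bigD1 set0) ?sub0set //= [X in _ + X]big1; last first.
    move=> A /andP [sAJ nA0]; apply: GG_zero; rewrite card_gt0 nA0 /=.
    exact: leq_trans (subset_leq_card sAJ) HJ.
  rewrite addr0 /GG (eq_bigr (fun=> 1)); last by move=> c _; rewrite big_set0.
  by rewrite sumr_const.
rewrite -E2 (eq_bigr _ (fun c _ => E1 c)) -mulr_sumr sum_ind.
by congr (_ * _%:R); apply: eq_card => c; rewrite !inE.
Qed.
End OA.


Section Design.
Variables (S : finType) (l : nat).

Lemma in_block (c : word S l) j : (c j, j) \in block c.
Proof. by apply/imsetP; exists j. Qed.

Lemma block_inj : injective (@block S l).
Proof.
move=> c c' E; apply/ffunP => j.
have := in_block c j; rewrite E => /imsetP [j' _ [E1 E2]].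
by rewrite E1 E2.
Qed.

Lemma blocks_at_inv (C : {set word S l}) (i : point S l) B :
  B \in blocks_at C i -> exists2 c, c \in C & B = block c /\ c i.2 = i.1.
Proof.
rewrite inE => /andP [/imsetP [c cC ->] /imsetP [j _ ->]].
by exists c.
Qed.

Lemma query_block (i : point S l) c x j : j != i.2 ->
  query i (block c, x) j = (c j, j).
Proof.
move=> /negbTE nj; rewrite /query nj.
case: pickP => [y /= /setIP [/imsetP [j' _ ->]] | H] /=.
  by rewrite inE /= => /eqP ->.
have := H (c j, j); rewrite /= inE in_block inE /= eqxx => //.
Qed.

Lemma query_snd (C : {set word S l}) (i : point S l) o j :
  o \in outcomes C i -> (query i o j).2 = j.
Proof.
rewrite inE => /blocks_at_inv [c _ [E _]].
case: (eqVneq j i.2) => [->|nj]; first by rewrite /query eqxx.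
by case: o E => B x /= ->; rewrite query_block.
Qed.
End Design.


Lemma recov (S : finType) (l : nat) (C : {set word S l}) (F : fieldType)
  (u : point S l -> F) : IC C u -> forall i o, o \in outcomes C i ->
  u i = - \sum_(j < l | j != i.2) u (query i o j).
Proof.
move=> hu [a js] [B x]; rewrite inE /= => /blocks_at_inv [c cC [-> /= ca]].
have := hu c cC; rewrite /block big_imset /=; last by move=> j1 j2 _ _ [].
rewrite (bigD1 js) //= ca => /eqP; rewrite addr_eq0 => /eqP ->.
congr (- _); apply: eq_big => j //= nj.
by rewrite query_block.
Qed.

Section Priv.
Variables (S : finType) (l t : nat) (C : {set word S l}).
Hypothesis hd : dual_distance_is C t.+2.
Hypothesis hs : (0 < #|S|)%N.
Local Notation s := (#|S|%:R : rat).

Lemma qp (T : {set 'I_l}) (HT : (#|T| <= t)%N) (i : point S l) (y : 'I_l -> point S l) :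
  query_prob C i (fun Q => [forall j in T, Q j == y j]) =
  if [forall j in T, (y j).2 == j] then (s ^+ #|T|)^-1 else 0.
Proof.
case: i => a js.
pose w : word S l := [ffun j => if j == js then a else (y j).1].
have wjs : w js = a by rewrite ffunE eqxx.
pose A1 := [set c in C | [forall j in [set js], c j == w j]].
have HA1 : s * #|A1|%:R = #|C|%:R.
  by have := OA hd hs (J := [set js]) w; rewrite cards1 expr1; apply.
have HBa : blocks_at C (a, js) = (@block S l) @: A1.
  apply/setP => B; apply/idP/idP.
    move=> HB; have [c cC [-> /= ca]] := blocks_at_inv HB.
    apply: imset_f; rewrite inE cC /=; apply/forall_inP => j.
    by rewrite inE => /eqP ->; rewrite ca wjs.
  move=> /imsetP [c]; rewrite inE => /andP [cC /forall_inP H] ->.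
  rewrite inE imset_f //=.
  have := H js; rewrite inE eqxx wjs => /(_ isT) /eqP <-.
  exact: in_block.
have Hout : (#|outcomes C (a, js)|)%:R = (#|C|)%:R :> rat.
  have -> : outcomes C (a, js) = setX (blocks_at C (a, js)) [set: S].
    by apply/setP => o; rewrite !inE andbT.
  by rewrite cardsX cardsT HBa card_imset; [rewrite natrM mulrC HA1 | exact: block_inj].
have Cn0 : (#|C|)%:R != 0 :> rat by rewrite pnatr_eq0 (C_nonempty hd).
rewrite /query_prob Hout.
case: ifP => Y; last first.
  have -> : [set o in outcomes C (a, js) |
              [forall j in T, query (a, js) o j == y j]] = set0.
    apply/setP => o; rewrite [in LHS]inE in_set0; apply/negbTE; apply/negP => /andP [oo /forall_inP H].
    move/negbT: Y => /forall_inPn [j jT /negP]; apply.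
    by rewrite -(eqP (H j jT)) (query_snd j oo).
  by rewrite cards0 mul0r.
have Yj : forall j, j \in T -> y j = ((y j).1, j).
  move=> j jT; have := forall_inP Y j jT; by case: (y j) => b j' /= /eqP ->.
pose J := js |: T.
pose A := [set c in C | [forall j in J, c j == w j]].
pose B := [set x : S | (js \in T) ==> (x == (y js).1)].
have cJ : #|J| = ((js \notin T) + #|T|)%N by rewrite cardsU1.
have HA : s ^+ #|J| * #|A|%:R = #|C|%:R.
  apply: (OA hd hs); rewrite cJ; case: (js \in T) => /=; [rewrite add0n; exact: leq_trans HT _ | by rewrite add1n ltnS].
have Hnum : [set o in outcomes C (a, js) | [forall j in T, query (a, js) o j == y j]]
    = (fun p : word S l * S => (block p.1, p.2)) @: setX A B.
  apply/setP => o; rewrite inE; apply/andP/imsetP.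
    move=> [oo HE]; move: (oo); rewrite inE => /blocks_at_inv [c cC [E1 /= ca]].
    have Eo : o = (block c, o.2) by case: o E1 {oo HE} => ? ? /= ->.
    exists (c, o.2) => //; rewrite inE /= !inE cC /=; apply/andP; split.
      apply/forall_inP => j; rewrite !inE => /orP [/eqP ->|jT]; first by rewrite ca wjs.
      case: (eqVneq j js) => [->|njs]; first by rewrite ca wjs.
      move/forall_inP: HE => /(_ j jT); rewrite Eo query_block // => /eqP E2.
      by rewrite ffunE (negbTE njs) -E2.
    apply/implyP => jT; move/forall_inP: HE => /(_ js jT).
    by rewrite /query eqxx (Yj js jT) xpair_eqE => /andP [].
  move=> [[c x]]; rewrite inE /= !inE => /andP [/andP [cC /forall_inP Hc] Hx] ->.
  have cjs : c js = a by have := Hc js; rewrite !inE eqxx wjs => /(_ isT) /eqP.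
  split.
    rewrite /= imset_f //=; rewrite -[X in (X, js)]cjs; exact: in_block.
  apply/forall_inP => j jT; rewrite (Yj j jT).
  case: (eqVneq j js) => [Ej|njs].
    rewrite Ej /query eqxx xpair_eqE eqxx andbT.
    by move/implyP: Hx; apply; rewrite -Ej.
  rewrite query_block // xpair_eqE eqxx andbT.
  have := Hc j; rewrite !inE jT orbT => /(_ isT) /eqP ->.
  by rewrite ffunE (negbTE njs).
rewrite Hnum card_imset; last by move=> [c x] [c' x'] /= [/block_inj -> ->].
rewrite cardsX natrM.
case: (boolP (js \in T)) => HjsT.
  have -> : B = [set (y js).1] by apply/setP => x; rewrite !inE HjsT.
  move: HA; rewrite cJ HjsT cards1 add0n mulr1 => HA.
  rewrite -HA.
  have sn0 : s != 0 by rewrite pnatr_eq0 -lt0n.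
  have An0 : #|A|%:R != 0 :> rat.
    by apply: contra Cn0 => /eqP A0; rewrite -HA A0 mulr0.
  field; apply/andP; split => //; exact: expf_neq0.
have -> : B = setT by apply/setP => x; rewrite !inE (negbTE HjsT).
move: HA; rewrite cJ HjsT cardsT add1n exprS => HA.
rewrite -HA.
have sn0 : s != 0 by rewrite pnatr_eq0 -lt0n.
have An0 : #|A|%:R != 0 :> rat.
  by apply: contra Cn0 => /eqP A0; rewrite -HA A0 mulr0.
field; rewrite An0 sn0 expf_neq0 //.
Qed.
End Priv.


Close Scope ring_scope.
Unset Implicit Arguments.

Theorem mainTheorem18 (S : finType) (l t : nat) (C : {set word S l})
  (F : finFieldType) :
  (1 <= t)%N ->
  dual_distance_is C t.+2 ->
  (t.+2 <= l)%N ->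
  (* t-privacy: for |T| <= t, (Q(i)_j)_{j in T} has the same law for all i *)
  (forall T : {set 'I_l}, (#|T| <= t)%N ->
     forall (i i' : point S l) (y : 'I_l -> point S l),
       query_prob C i (fun Q => [forall j in T, Q j == y j]) =
       query_prob C i' (fun Q => [forall j in T, Q j == y j]))
  /\
  (* recovery: u_i = - sum_{j <> j_star} u_{Q(i)_j} for every outcome *)
  (forall (u : point S l -> F), IC C u ->
     forall (i : point S l) o, o \in outcomes C i ->
       u i = - \sum_(j < l | j != i.2) u (query i o j))%R.
Proof.
move=> t1 hd hl; split.
  move=> T HT i i' y.
  have hs : (0 < #|S|)%N by apply/card_gt0P; exists i.1.
  by rewrite (qp hd hs HT) (qp hd hs HT).
move=> u hu i o oo; have := @recov S l C F u hu i o oo. exact.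
Qed.
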